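(* Let $n\ge 1$, let $\mathbf r\in\mathbb{R}^n$ have all entries negative, let $\lambda>0$, let $\mathbf R = \operatorname{diag}(\exp(-\mathbf r/\lambda))$, let $\mathbf P$ be an $n\times n$ row-stochastic matrix, let $\tilde{\mathbf P} = (\mathbf P+\mathbf P^\top)/2$, and assume $\mathbf R - \tilde{\mathbf P}$ is invertible. Fix an index $s_T\in\{1,\dots,n\}$ (corresponding to a terminal state). Consider the problem $$\min_{\mathbf v\in\mathbb{R}^n} \exp(\mathbf v)^\top(\mathbf R - \tilde{\mathbf P})\exp(\mathbf v) \quad\text{subject to}\quad v(s_T) = 0 .$$ If $\mathbf v^*$ is a minimizer of this problem, then there is a scalar $\alpha\in\mathbb{R}$ such that $$\exp(\mathbf v^* ) = \alpha\,(\mathbf R - \tilde{\mathbf P})^{-1}\mathbf b_{s_T},$$ i.e., $\mathbf v^*$ is the entrywise logarithm of a scalar multiple of the column of the symmetrized default representation $(\mathbf R - \tilde{\mathbf P})^{-1}$ corresponding to $s_T$.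
   Context: $\exp$, $\log$ and $\operatorname{diag}$ act entrywise; $\mathbf b_{s_T}$ is the standard basis vector with a $1$ in entry $s_T$. The matrix $(\mathbf R - \tilde{\mathbf P})^{-1}$ is called the (symmetrized) default representation (DR), where $\mathbf r$ is the vector of state rewards and $\mathbf P$ the transition matrix induced by a default policy. *)

(* Defs.v *)
From HB Require Import structures.
From mathcomp Require Import all_boot all_order all_algebra.
From mathcomp Require Import all_classical all_reals all_analysis.
Set Implicit Arguments. Unset Strict Implicit. Unset Printing Implicit Defensive.
Import Order.TTheory GRing.Theory Num.Theory.
Local Open Scope ring_scope.

(* R : realType. Indices s_T range over 'I_n (0-based). *)

Definition expv (R : realType) (n : nat) (v : 'cV[R]_n) : 'cV[R]_n :=
  \col_i expR (v i 0).

Definition row_stochastic (R : realType) (n : nat) (P : 'M[R]_n) : Prop :=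
  (forall i j, 0 <= P i j) /\ (forall i, \sum_j P i j = 1).

Definition reward_mx (R : realType) (n : nat) (r : 'cV[R]_n) (lam : R) : 'M[R]_n :=
  diag_mx (\row_i expR (- r i 0 / lam)).

Definition sym_mx (R : realType) (n : nat) (P : 'M[R]_n) : 'M[R]_n :=
  (2%:R)^-1 *: (P + P^T).

Definition dr_objective (R : realType) (n : nat) (M : 'M[R]_n) (v : 'cV[R]_n) : R :=
  ((expv v)^T *m M *m expv v) 0 0.

Definition basis_vec (R : realType) (n : nat) (s : 'I_n) : 'cV[R]_n :=
  \col_i (if i == s then 1 else 0).

Definition is_constrained_minimizer (R : realType) (n : nat) (M : 'M[R]_n)
    (s : 'I_n) (v : 'cV[R]_n) : Prop :=
  v s 0 = 0 /\ forall w : 'cV[R]_n, w s 0 = 0 -> dr_objective M v <= dr_objective M w.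

(* Main.v *)
Require Import Defs.
From HB Require Import structures.
From mathcomp Require Import all_boot all_order all_algebra.
From mathcomp Require Import all_classical all_reals all_analysis.
From mathcomp Require Import ring lra.
Import Order.TTheory GRing.Theory Num.Theory.
Local Open Scope ring_scope.
Lemma quad_exp (R : realType) (n : nat) (M : 'M[R]_n) (x : 'cV[R]_n) (i : 'I_n) (u : R) :
  M^T = M ->
  ((x + u *: delta_mx i 0)^T *m M *m (x + u *: delta_mx i 0)) 0 0 =
  (x^T *m M *m x) 0 0 + 2 * u * (M *m x) i 0 + u ^+ 2 * M i i.
Proof.
move=> hM.
have e1 : (x^T *m M *m delta_mx i (0:'I_1)) 0 0 = (M *m x) i 0.
  have -> : x^T *m M *m delta_mx i (0:'I_1) = col i (x^T *m M) by rewrite colE.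
  rewrite mxE -{1}hM -trmx_mul mxE; done.
have e2 : (delta_mx (0:'I_1) i *m M *m x) 0 0 = (M *m x) i 0.
  have -> : delta_mx (0:'I_1) i *m M = row i M by rewrite rowE.
  by rewrite -row_mul mxE.
have e3 : (delta_mx (0:'I_1) i *m M *m delta_mx i (0:'I_1)) 0 0 = M i i.
  have -> : delta_mx (0:'I_1) i *m M = row i M by rewrite rowE.
  have -> : row i M *m delta_mx i (0:'I_1) = col i (row i M) by rewrite colE.
  by rewrite !mxE.
have -> : (x + u *: delta_mx i 0)^T = x^T + u *: delta_mx 0 i.
  by rewrite linearD /= linearZ /= trmx_delta.
rewrite !mulmxDl !mulmxDr -!scalemxAl -!scalemxAr.
move: e1 e2 e3.
set a := x^T *m M *m x; set b := x^T *m M *m _; set c := _ *m M *m x; set d := _ *m M *m delta_mx i 0.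
move=> e1 e2 e3.
set g := (M *m x) i 0 in e1 e2 *. clearbody a b c d g. rewrite !mxE e1 e2 e3. ring. Qed.

Lemma small_lemma (R : realType) (a g m : R) : 0 < a ->
  (forall u, - a < u -> 0 <= 2 * u * g + u ^+ 2 * m) -> g = 0.
Proof.
move=> ha H.
have [->//|gn0] := eqVneq g 0.
have gpos : 0 < `|g| by rewrite normr_gt0.
have mp : 0 < `|m| + 1 by rewrite ltr_pwDr // normr_ge0.
have [e [e0 ea em]] : exists e, [/\ 0 < e, e < a & e * (`|m| + 1) <= `|g|].
  have [h|h] := leP (a / 2) (`|g| / (`|m| + 1)).
    exists (a / 2); split; first by rewrite divr_gt0.
      lra.
    by rewrite -ler_pdivlMr.
  exists (`|g| / (`|m| + 1)); split; first by rewrite divr_gt0.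
    lra.
  by rewrite divfK // gt_eqF.
have h1 := H e ltac:(lra).
have h2 := H (- e) ltac:(lra).
have h1' : 0 <= 2 * g + e * m.
  have eq : 2 * e * g + e ^+ 2 * m = e * (2 * g + e * m) by ring.
  by rewrite eq pmulr_rge0 in h1.
have h2' : 0 <= - 2 * g + e * m.
  have eq : 2 * - e * g + (- e) ^+ 2 * m = e * (- 2 * g + e * m) by ring.
  by rewrite eq pmulr_rge0 in h2.
have hm : e * m <= e * (`|m| + 1).
  rewrite ler_pM2l //; have := ler_norm m; lra.
have : `|g| <= 0.
  move: em hm; case: (ger0P g) => hg; lra.
by rewrite normr_le0 (negPf gn0).
Qed.

Lemma foc (R : realType) (n : nat) (M : 'M[R]_n) (s : 'I_n) (v : 'cV[R]_n) :
  M^T = M -> is_constrained_minimizer M s v ->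
  forall i, i != s -> (M *m expv v) i 0 = 0.
Proof.
move=> hM [hs hmin] i his.
set x := expv v.
have xi : x i 0 = expR (v i 0) by rewrite mxE.
have xpos : 0 < x i 0 by rewrite xi expR_gt0.
apply: (@small_lemma R (x i 0) ((M *m x) i 0) (M i i) xpos) => u hu.
have hpos : 0 < 1 + u / x i 0.
  have : - 1 < u / x i 0 by rewrite ltr_pdivlMr // mulN1r.
  lra.
pose w := v + ln (1 + u / x i 0) *: delta_mx i 0.
have ws : w s 0 = 0.
  by rewrite !mxE hs eq_sym (negPf his) /= mulr0 addr0.
have ew : expv w = x + u *: delta_mx i 0.
  apply/matrixP => j k; rewrite (ord1 k) !mxE.
  case: (eqVneq j i) => [->|hji] /=.
    rewrite mulr1 expRD lnK ?posrE // -xi. rewrite mulr1 mulrDr mulr1 mulrCA divff ?mulr1 //. by rewrite gt_eqF.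
    exact: hpos.
  by rewrite !mulr0 !addr0.
have := hmin w ws.
rewrite /dr_objective ew quad_exp // -/x.
lra.
Qed.

Theorem proposition3p10 (R : realType) (n : nat) (hn : (1 <= n)%N)
  (r : 'cV[R]_n) (hr : forall i, r i 0 < 0) (lam : R) (hlam : 0 < lam)
  (P : 'M[R]_n) (hP : row_stochastic P)
  (hinv : reward_mx r lam - sym_mx P \in unitmx)
  (sT : 'I_n) (vstar : 'cV[R]_n)
  (hmin : is_constrained_minimizer (reward_mx r lam - sym_mx P) sT vstar) :
  exists alpha : R,
    expv vstar = alpha *: (invmx (reward_mx r lam - sym_mx P) *m basis_vec R sT).
Proof.
set M := reward_mx r lam - sym_mx P.
have hM : M^T = M.
  rewrite /M /reward_mx /sym_mx linearB /= tr_diag_mx linearZ /= linearD /= trmxK.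
  by rewrite (addrC P^T).
have hf := @foc R n M sT vstar hM hmin.
exists ((M *m expv vstar) sT 0).
rewrite scalemxAr.
have -> : (M *m expv vstar) sT 0 *: basis_vec R sT = M *m expv vstar.
  apply/matrixP => j k; rewrite (ord1 k) !mxE.
  case: (eqVneq j sT) => [->|hj]; first by rewrite mulr1.
  by rewrite mulr0; have := hf j hj; rewrite mxE.
by rewrite mulKmx.
Qed.
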